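(* Let $n\ge1$, $\gamma>1$, $\rho\in(0,1/n)$, $\theta>1$, $t\in[0,n]$, $\vartheta\in(0,1)$, and let $h:[0,1]\to[1,\infty)$ be differentiable, increasing and concave with $h(0)=1$, $h(1)=\bar h>1$; assume $n\frac{\gamma-1}{\gamma}<1$, $\bar h^{1/\gamma}>\frac1{1-n\rho}$ and $\frac{h'(x)}{\gamma h(x)}>\frac{n\rho}{1-n\rho x}$ for all $x\in[0,1]$. Let $\tau_1=\frac{h'(0)}{\gamma}-\rho$ and $\tau_2=\big[1+\big(\frac{h'(1)}{\gamma\bar h}-\frac{\rho}{1-n\rho}\big)^{-1}\big]^{-1}$, and in the region $\tau_2(1-\vartheta)<\theta\frac tn<\tau_1(1-\vartheta)$ let $\hat x\in(0,1)$ be the solution of $$\Big(\frac{h'(x)}{\gamma h(x)}-\frac{\rho}{1-n\rho x}\Big)\Big(1-\vartheta-\theta\frac{t}{n}x\Big)=\theta\frac{t}{n}.$$ Then (1) $\hat x$ is decreasing in $\vartheta$, $\theta$, $t$ and $\rho$; (2) for every $n\ge3$, $\hat x$ is increasing in $n$.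
   Context: $\hat x$ is the symmetric interior equilibrium amount of adulterant chosen by sellers on an e-commerce platform under preemptive economically motivated adulteration; $\vartheta$ is the platform's take rate, $\theta$ the penalty intensity, $t$ the number of randomly inspected sellers out of $n$ sellers, $\rho$ consumers' quality consciousness, $\gamma$ price sensitivity, $h$ the quality improvement from adulteration. *)

(* Defs.v *)
From Stdlib Require Import Reals.
Open Scope R_scope.

(* [hd x] is the derivative of [h] at [x] relative to the domain [0,1]
   (one-sided at the endpoints 0 and 1), as for h : [0,1] -> [1,oo). *)
Definition deriv_on01 (h hd : R -> R) : Prop :=
  forall x, 0 <= x <= 1 ->
    limit1_in (fun y => (h y - h x) / (y - x))
              (fun y => 0 <= y <= 1 /\ y <> x) (hd x) x.

Definition h_assumptions (h hd : R -> R) : Prop :=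
  deriv_on01 h hd /\
  (forall x, 0 <= x <= 1 -> 1 <= h x) /\
  (forall x y, 0 <= x <= 1 -> 0 <= y <= 1 -> x < y -> h x < h y) /\
  (forall x y l, 0 <= x <= 1 -> 0 <= y <= 1 -> 0 <= l <= 1 ->
     l * h x + (1 - l) * h y <= h (l * x + (1 - l) * y)) /\
  h 0 = 1 /\ 1 < h 1.

Definition tau1 (gam rho : R) (hd : R -> R) : R := hd 0 / gam - rho.

Definition tau2 (n : nat) (gam rho : R) (h hd : R -> R) : R :=
  / (1 + / (hd 1 / (gam * h 1) - rho / (1 - INR n * rho))).

Definition admissible (n : nat) (gam rho th t vt : R) (h hd : R -> R) : Prop :=
  (1 <= n)%nat /\ 1 < gam /\ 0 < rho < / INR n /\ 1 < th /\
  0 <= t <= INR n /\ 0 < vt < 1 /\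
  INR n * ((gam - 1) / gam) < 1 /\
  / (1 - INR n * rho) < Rpower (h 1) (/ gam) /\
  (forall x, 0 <= x <= 1 ->
     INR n * rho / (1 - INR n * rho * x) < hd x / (gam * h x)) /\
  tau2 n gam rho h hd * (1 - vt) < th * (t / INR n) /\
  th * (t / INR n) < tau1 gam rho hd * (1 - vt).

Definition is_xhat (n : nat) (gam rho th t vt : R) (h hd : R -> R) (x : R) : Prop :=
  0 < x < 1 /\
  (hd x / (gam * h x) - rho / (1 - INR n * rho * x))
    * (1 - vt - th * (t / INR n) * x) = th * (t / INR n).

(* Main.v *)
Require Import Defs.
From Stdlib Require Import Reals Lra Psatz.
Open Scope R_scope.

Lemma chord_right h hd : h_assumptions h hd -> forall x y, 0 <= x -> x < y -> y <= 1 ->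
  (h y - h x) / (y - x) <= hd x.
Proof.
  intros [Hd [H1 [Hinc [Hconc [H0 Hb]]]]] x y Hx Hxy Hy.
  set (S := (h y - h x) / (y - x)).
  assert (HS : S * (y - x) = h y - h x) by (unfold S; field; lra).
  apply Rnot_lt_le; intro Hlt.
  specialize (Hd x ltac:(lra)). unfold limit1_in, limit_in in Hd; simpl in Hd; unfold R_dist in Hd.
  destruct (Hd (S - hd x) ltac:(lra)) as [alp [Halp Hlim]].
  set (m := Rmin alp (y - x)).
  assert (Hm1 : 0 < m) by (unfold m; apply Rmin_glb_lt; lra).
  assert (Hm2 : m <= alp) by (unfold m; apply Rmin_l).
  assert (Hm3 : m <= y - x) by (unfold m; apply Rmin_r).
  set (z := x + m / 2).
  specialize (Hlim z).
  assert (Hz : (0 <= z <= 1 /\ z <> x) /\ Rabs (z - x) < alp).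
  { unfold z; split; [split; [lra|lra]|]. replace (x + m/2 - x) with (m/2) by ring.
    rewrite Rabs_right; lra. }
  specialize (Hlim Hz).
  set (q := (h z - h x) / (z - x)) in Hlim.
  assert (Hq : q * (z - x) = h z - h x) by (unfold q; field; unfold z; lra).
  set (l := (y - z) / (y - x)).
  assert (Hl : l * (y - x) = y - z) by (unfold l; field; lra).
  assert (Hl01 : 0 <= l <= 1).
  { assert (0 <= y - z <= y - x) by (unfold z; lra). split; nra. }
  assert (Hzl : l * x + (1 - l) * y = z) by (unfold l; field; lra).
  pose proof (Hconc x y l ltac:(lra) ltac:(lra) Hl01) as Hc. rewrite Hzl in Hc.
  assert (Hqs : S <= q).
  {
    assert (E : (1 - l) * (y - x) = z - x) by lra.
    assert (Hpos : 0 < z - x) by (unfold z; lra).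
    assert (K : (1 - l) * (h y - h x) <= h z - h x) by lra.
    assert (K2 : (z - x) * S * (y - x) <= q * (z - x) * (y - x)).
    { rewrite Hq. replace ((z - x) * S * (y - x)) with ((1 - l) * (y - x) * (S * (y - x))) by (rewrite E; ring).
      rewrite HS. nra. }
    nra. }
  apply Rabs_def2 in Hlim. lra.
Qed.

Lemma chord_left h hd : h_assumptions h hd -> forall x y, 0 <= x -> x < y -> y <= 1 ->
  hd y <= (h y - h x) / (y - x).
Proof.
  intros [Hd [H1 [Hinc [Hconc [H0 Hb]]]]] x y Hx Hxy Hy.
  set (S := (h y - h x) / (y - x)).
  assert (HS : S * (y - x) = h y - h x) by (unfold S; field; lra).
  apply Rnot_lt_le; intro Hlt.
  specialize (Hd y ltac:(lra)). unfold limit1_in, limit_in in Hd; simpl in Hd; unfold R_dist in Hd.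
  destruct (Hd (hd y - S) ltac:(lra)) as [alp [Halp Hlim]].
  set (m := Rmin alp (y - x)).
  assert (Hm1 : 0 < m) by (unfold m; apply Rmin_glb_lt; lra).
  assert (Hm2 : m <= alp) by (unfold m; apply Rmin_l).
  assert (Hm3 : m <= y - x) by (unfold m; apply Rmin_r).
  set (z := y - m / 2).
  specialize (Hlim z).
  assert (Hz : (0 <= z <= 1 /\ z <> y) /\ Rabs (z - y) < alp).
  { unfold z; split; [split; [lra|lra]|]. replace (y - m/2 - y) with (- (m/2)) by ring.
    rewrite Rabs_Ropp, Rabs_right; lra. }
  specialize (Hlim Hz).
  set (q := (h z - h y) / (z - y)) in Hlim.
  assert (Hq : q * (y - z) = h y - h z) by (unfold q; field; unfold z; lra).
  set (l := (y - z) / (y - x)).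
  assert (Hl : l * (y - x) = y - z) by (unfold l; field; lra).
  assert (Hl01 : 0 <= l <= 1).
  { assert (0 <= y - z <= y - x) by (unfold z; lra). split; nra. }
  assert (Hzl : l * x + (1 - l) * y = z) by (unfold l; field; lra).
  pose proof (Hconc x y l ltac:(lra) ltac:(lra) Hl01) as Hc. rewrite Hzl in Hc.
  assert (Hqs : q <= S).
  { assert (Hpos : 0 < y - z) by (unfold z; lra).
    assert (K : h y - h z <= l * (h y - h x)) by lra.
    assert (K2 : q * (y - z) * (y - x) <= (y - z) * S * (y - x)).
    { rewrite Hq. replace ((y - z) * S * (y - x)) with (l * (y - x) * (S * (y - x))) by (rewrite Hl; ring).
      rewrite HS. nra. }
    nra. }
  apply Rabs_def2 in Hlim. lra.
Qed.

Lemma hd_anti h hd : h_assumptions h hd -> forall x y, 0 <= x -> x < y -> y <= 1 -> hd y <= hd x.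
Proof.
  intros HA x y Hx Hxy Hy.
  pose proof (chord_left h hd HA x y Hx Hxy Hy). pose proof (chord_right h hd HA x y Hx Hxy Hy). lra.
Qed.

Lemma hd1_lt h hd : h_assumptions h hd -> hd 1 < h 1.
Proof.
  intros HA. pose proof (chord_left h hd HA 0 1 ltac:(lra) ltac:(lra) ltac:(lra)) as H.
  destruct HA as [_ [_ [_ [_ [H0 _]]]]]. rewrite H0 in H.
  replace ((h 1 - 1) / (1 - 0)) with (h 1 - 1) in H by field. lra.
Qed.

Lemma f_mono h hd gam : h_assumptions h hd -> 0 < gam -> forall x y, 0 <= x -> x <= y -> y <= 1 ->
  0 < hd y -> hd y / (gam * h y) <= hd x / (gam * h x).
Proof.
  intros HA Hg x y Hx Hxy Hy Hpos.
  destruct (Req_dec x y) as [->|Hne]; [lra|].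
  assert (Hlt : x < y) by lra.
  pose proof (hd_anti h hd HA x y Hx Hlt Hy) as Hdd.
  destruct HA as [_ [H1 [Hinc _]]].
  pose proof (H1 x ltac:(lra)). pose proof (H1 y ltac:(lra)).
  pose proof (Hinc x y ltac:(lra) ltac:(lra) Hlt).
  set (p := hd y / (gam * h y)). set (q := hd x / (gam * h x)).
  assert (Hp : p * (gam * h y) = hd y) by (unfold p; field; lra).
  assert (Hq : q * (gam * h x) = hd x) by (unfold q; field; lra).
  assert (0 < p) by (unfold p; apply Rdiv_lt_0_compat; nra).
  assert (0 < gam * h x) by nra.
  assert (p * (gam * h x) <= q * (gam * h x)) by nra.
  nra.
Qed.

Lemma basic h hd n gam rho th t vt x : h_assumptions h hd ->
  admissible n gam rho th t vt h hd -> is_xhat n gam rho th t vt h hd x ->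
  1 <= INR n /\ 1 < gam /\ 0 < rho /\ INR n * rho < 1/2 /\ 1 < th /\ 0 < t /\ 0 < vt < 1 /\
  0 < th * (t / INR n) /\ 0 < hd x /\ 0 < x < 1 /\
  0 < hd x / (gam * h x) - rho / (1 - INR n * rho * x) /\
  0 < 1 - vt - th * (t / INR n) * x /\
  (hd x / (gam * h x) - rho / (1 - INR n * rho * x)) * (1 - vt - th * (t / INR n) * x)
     = th * (t / INR n).
Proof.
  intros HA [Hn [Hg [[Hr0 Hr1] [Hth [Ht [Hvt [Hng [Hpow [Hall [Hreg2 Hreg1]]]]]]]]]] [Hx Heq].
  pose proof (hd1_lt h hd HA) as Hd1.
  destruct HA as [_ [H1 _]].
  assert (HN : 1 <= INR n) by (apply (le_INR 1); exact Hn).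
  assert (HNr : INR n * rho < 1).
  { apply (Rmult_lt_compat_l (INR n)) in Hr1; [|lra]. rewrite Rinv_r in Hr1; lra. }
  assert (Hh1 : 1 <= h 1) by (apply H1; lra).
  pose proof (Hall 1 ltac:(lra)) as Hall1. rewrite Rmult_1_r in Hall1.
  assert (Hf1 : hd 1 / (gam * h 1) < 1).
  { apply (Rmult_lt_reg_r (gam * h 1)); [nra|]. unfold Rdiv. rewrite Rmult_assoc, Rinv_l; nra. }
  set (w := INR n * rho / (1 - INR n * rho)) in Hall1.
  assert (Hw : w * (1 - INR n * rho) = INR n * rho) by (unfold w; field; lra).
  assert (HNr2 : INR n * rho < 1/2) by nra.
  assert (Hxx := Hall x ltac:(lra)).
  assert (Hden : 0 < 1 - INR n * rho * x) by nra.
  set (g := rho / (1 - INR n * rho * x)) in *.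
  assert (Hgd : g * (1 - INR n * rho * x) = rho) by (unfold g; field; lra).
  set (G := INR n * rho / (1 - INR n * rho * x)) in *.
  assert (HGd : G * (1 - INR n * rho * x) = INR n * rho) by (unfold G; field; lra).
  assert (Hgg : g <= G) by nra.
  assert (Hg0 : 0 < g) by nra.
  set (f := hd x / (gam * h x)) in *.
  assert (Hhx : 1 <= h x) by (apply H1; lra).
  assert (Hfd : f * (gam * h x) = hd x) by (unfold f; field; lra).
  assert (Hc : 0 < th * (t / INR n)).
  {
    unfold tau2 in Hreg2.
    set (a := hd 1 / (gam * h 1) - rho / (1 - INR n * rho)) in Hreg2.
    assert (Ha : 0 < a).
    { unfold a. set (g1 := rho / (1 - INR n * rho)).
      assert (g1 * (1 - INR n * rho) = rho) by (unfold g1; field; lra). nra. }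
    assert (0 < / (1 + / a)).
    { apply Rinv_0_lt_compat. pose proof (Rinv_0_lt_compat a Ha). lra. }
    nra. }
  assert (Ht0 : 0 < t).
  { destruct Ht as [[Ht|Ht] _]; [exact Ht|]. subst t. unfold Rdiv in Hc. rewrite Rmult_0_l, Rmult_0_r in Hc. lra. }
  assert (HA0 : 0 < f - g) by lra.
  assert (0 < hd x) by (rewrite <- Hfd; apply Rmult_lt_0_compat; nra).
  repeat split; try lra; try nra.
Qed.

Lemma g_cmp N1 N2 r1 r2 x1 x2 : 0 < r1 <= r2 -> 0 <= N1*r1*x1 <= N2*r2*x2 -> N2*r2*x2 < 1 ->
  r1/(1-N1*r1*x1) <= r2/(1-N2*r2*x2).
Proof.
  intros Hr Hp H1.
  set (p := r1/(1-N1*r1*x1)). set (q := r2/(1-N2*r2*x2)).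
  assert (Hp' : p * (1-N1*r1*x1) = r1) by (unfold p; field; lra).
  assert (Hq' : q * (1-N2*r2*x2) = r2) by (unfold q; field; lra).
  assert (0 < q) by nra. nra.
Qed.

Lemma g_cmp_strict N1 N2 r1 r2 x1 x2 : 0 < r1 < r2 -> 0 <= N1*r1*x1 <= N2*r2*x2 -> N2*r2*x2 < 1 ->
  r1/(1-N1*r1*x1) < r2/(1-N2*r2*x2).
Proof.
  intros Hr Hp H1.
  set (p := r1/(1-N1*r1*x1)). set (q := r2/(1-N2*r2*x2)).
  assert (Hp' : p * (1-N1*r1*x1) = r1) by (unfold p; field; lra).
  assert (Hq' : q * (1-N2*r2*x2) = r2) by (unfold q; field; lra).
  assert (0 < q) by nra. nra.
Qed.

Lemma prod_lt a1 a2 b1 b2 : 0 < a2 <= a1 -> 0 < b2 <= b1 -> (a2 < a1 \/ b2 < b1) -> a2*b2 < a1*b1.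
Proof. intros; destruct H1; nra. Qed.

Lemma part1a h hd : h_assumptions h hd ->
  (forall n gam rho th t vt1 vt2 x1 x2,
     admissible n gam rho th t vt1 h hd -> admissible n gam rho th t vt2 h hd ->
     is_xhat n gam rho th t vt1 h hd x1 -> is_xhat n gam rho th t vt2 h hd x2 ->
     vt1 < vt2 -> x2 < x1).
Proof.
  intros HA n gam rho th t vt1 vt2 x1 x2 Ad1 Ad2 X1 X2 Hlt.
  destruct (basic h hd n gam rho th t vt1 x1 HA Ad1 X1) as [HN [Hg [Hr [HNr [Hth [Ht [Hvt [Hc [Hd1 [Hx1 [HA1 [HB1 HE1]]]]]]]]]]]].
  destruct (basic h hd n gam rho th t vt2 x2 HA Ad2 X2) as [_ [_ [_ [_ [_ [_ [Hvt2 [_ [Hd2 [Hx2 [HA2 [HB2 HE2]]]]]]]]]]]].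
  apply Rnot_le_lt; intro Hle.
  pose proof (f_mono h hd gam HA ltac:(lra) x1 x2 ltac:(lra) Hle ltac:(lra) Hd2) as Hf.
  assert (Hgc : rho / (1 - INR n * rho * x1) <= rho / (1 - INR n * rho * x2)).
  { apply g_cmp; [lra| |nra]. assert (0 <= INR n * rho) by nra. split; [nra|]. apply Rmult_le_compat_l; lra. }
  set (c := th * (t / INR n)) in *.
  set (A1 := hd x1 / (gam * h x1) - rho / (1 - INR n * rho * x1)) in *.
  set (A2 := hd x2 / (gam * h x2) - rho / (1 - INR n * rho * x2)) in *.
  assert (A2 <= A1) by (unfold A1, A2; lra).
  assert (1 - vt2 - c * x2 < 1 - vt1 - c * x1) by nra.
  pose proof (prod_lt A1 A2 (1 - vt1 - c * x1) (1 - vt2 - c * x2) ltac:(lra) ltac:(lra) (or_intror H0)).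
  lra.
Qed.

Lemma part1b h hd : h_assumptions h hd ->
  (forall n gam rho th1 th2 t vt x1 x2,
     admissible n gam rho th1 t vt h hd -> admissible n gam rho th2 t vt h hd ->
     is_xhat n gam rho th1 t vt h hd x1 -> is_xhat n gam rho th2 t vt h hd x2 ->
     th1 < th2 -> x2 < x1).
Proof.
  intros HA n gam rho th1 th2 t vt x1 x2 Ad1 Ad2 X1 X2 Hlt.
  destruct (basic h hd n gam rho th1 t vt x1 HA Ad1 X1) as [HN [Hg [Hr [HNr [Hth [Ht [Hvt [Hc [Hd1 [Hx1 [HA1 [HB1 HE1]]]]]]]]]]]].
  destruct (basic h hd n gam rho th2 t vt x2 HA Ad2 X2) as [_ [_ [_ [_ [_ [_ [Hvt2 [Hc2 [Hd2 [Hx2 [HA2 [HB2 HE2]]]]]]]]]]]].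
  apply Rnot_le_lt; intro Hle.
  pose proof (f_mono h hd gam HA ltac:(lra) x1 x2 ltac:(lra) Hle ltac:(lra) Hd2) as Hf.
  assert (Hgc : rho / (1 - INR n * rho * x1) <= rho / (1 - INR n * rho * x2)).
  { apply g_cmp; [lra| |nra]. assert (0 <= INR n * rho) by nra. split; [nra|]. apply Rmult_le_compat_l; lra. }
  assert (Htn : 0 < t / INR n) by (apply Rdiv_lt_0_compat; lra).
  assert (Hcc : th1 * (t / INR n) < th2 * (t / INR n)) by nra.
  set (c1 := th1 * (t / INR n)) in *. set (c2 := th2 * (t / INR n)) in *.
  set (A1 := hd x1 / (gam * h x1) - rho / (1 - INR n * rho * x1)) in *.
  set (A2 := hd x2 / (gam * h x2) - rho / (1 - INR n * rho * x2)) in *.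
  assert (A2 <= A1) by (unfold A1, A2; lra).
  assert (1 - vt - c2 * x2 < 1 - vt - c1 * x1) by nra.
  pose proof (prod_lt A1 A2 (1 - vt - c1 * x1) (1 - vt - c2 * x2) ltac:(lra) ltac:(lra) (or_intror H0)).
  lra.
Qed.

Lemma part1c h hd : h_assumptions h hd ->
  (forall n gam rho th t1 t2 vt x1 x2,
     admissible n gam rho th t1 vt h hd -> admissible n gam rho th t2 vt h hd ->
     is_xhat n gam rho th t1 vt h hd x1 -> is_xhat n gam rho th t2 vt h hd x2 ->
     t1 < t2 -> x2 < x1).
Proof.
  intros HA n gam rho th t1 t2 vt x1 x2 Ad1 Ad2 X1 X2 Hlt.
  destruct (basic h hd n gam rho th t1 vt x1 HA Ad1 X1) as [HN [Hg [Hr [HNr [Hth [Ht [Hvt [Hc [Hd1 [Hx1 [HA1 [HB1 HE1]]]]]]]]]]]].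
  destruct (basic h hd n gam rho th t2 vt x2 HA Ad2 X2) as [_ [_ [_ [_ [_ [_ [Hvt2 [Hc2 [Hd2 [Hx2 [HA2 [HB2 HE2]]]]]]]]]]]].
  apply Rnot_le_lt; intro Hle.
  pose proof (f_mono h hd gam HA ltac:(lra) x1 x2 ltac:(lra) Hle ltac:(lra) Hd2) as Hf.
  assert (Hgc : rho / (1 - INR n * rho * x1) <= rho / (1 - INR n * rho * x2)).
  { apply g_cmp; [lra| |nra]. assert (0 <= INR n * rho) by nra. split; [nra|]. apply Rmult_le_compat_l; lra. }
  assert (Htn : t1 / INR n < t2 / INR n).
  { unfold Rdiv. apply Rmult_lt_compat_r; [apply Rinv_0_lt_compat; lra|lra]. }
  assert (Hcc : th * (t1 / INR n) < th * (t2 / INR n)) by nra.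
  set (c1 := th * (t1 / INR n)) in *. set (c2 := th * (t2 / INR n)) in *.
  set (A1 := hd x1 / (gam * h x1) - rho / (1 - INR n * rho * x1)) in *.
  set (A2 := hd x2 / (gam * h x2) - rho / (1 - INR n * rho * x2)) in *.
  assert (A2 <= A1) by (unfold A1, A2; lra).
  assert (1 - vt - c2 * x2 < 1 - vt - c1 * x1) by nra.
  pose proof (prod_lt A1 A2 (1 - vt - c1 * x1) (1 - vt - c2 * x2) ltac:(lra) ltac:(lra) (or_intror H0)).
  lra.
Qed.

Lemma part1d h hd : h_assumptions h hd ->
  (forall n gam rho1 rho2 th t vt x1 x2,
     admissible n gam rho1 th t vt h hd -> admissible n gam rho2 th t vt h hd ->
     is_xhat n gam rho1 th t vt h hd x1 -> is_xhat n gam rho2 th t vt h hd x2 ->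
     rho1 < rho2 -> x2 < x1).
Proof.
  intros HA n gam rho1 rho2 th t vt x1 x2 Ad1 Ad2 X1 X2 Hlt.
  destruct (basic h hd n gam rho1 th t vt x1 HA Ad1 X1) as [HN [Hg [Hr [HNr [Hth [Ht [Hvt [Hc [Hd1 [Hx1 [HA1 [HB1 HE1]]]]]]]]]]]].
  destruct (basic h hd n gam rho2 th t vt x2 HA Ad2 X2) as [_ [_ [Hr2 [HNr2 [_ [_ [Hvt2 [Hc2 [Hd2 [Hx2 [HA2 [HB2 HE2]]]]]]]]]]]].
  apply Rnot_le_lt; intro Hle.
  pose proof (f_mono h hd gam HA ltac:(lra) x1 x2 ltac:(lra) Hle ltac:(lra) Hd2) as Hf.
  assert (Hgc : rho1 / (1 - INR n * rho1 * x1) < rho2 / (1 - INR n * rho2 * x2)).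
  { apply g_cmp_strict; [lra| |nra]. assert (0 <= INR n * rho1) by nra. split; [nra|].
    assert (rho1 * x1 <= rho2 * x2) by nra. nra. }
  set (c := th * (t / INR n)) in *.
  set (A1 := hd x1 / (gam * h x1) - rho1 / (1 - INR n * rho1 * x1)) in *.
  set (A2 := hd x2 / (gam * h x2) - rho2 / (1 - INR n * rho2 * x2)) in *.
  assert (A2 < A1) by (unfold A1, A2; lra).
  assert (1 - vt - c * x2 <= 1 - vt - c * x1) by nra.
  pose proof (prod_lt A1 A2 (1 - vt - c * x1) (1 - vt - c * x2) ltac:(lra) ltac:(lra) (or_introl H)).
  lra.
Qed.

Lemma part2 h hd : h_assumptions h hd ->
  (forall (n1 n2 : nat) gam rho th t vt x1 x2,
     (3 <= n1)%nat -> (n1 < n2)%nat ->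
     admissible n1 gam rho th t vt h hd -> admissible n2 gam rho th t vt h hd ->
     is_xhat n1 gam rho th t vt h hd x1 -> is_xhat n2 gam rho th t vt h hd x2 ->
     x1 < x2).
Proof.
  intros HA n1 n2 gam rho th t vt x1 x2 H3 H12 Ad1 Ad2 X1 X2.
  destruct (basic h hd n1 gam rho th t vt x1 HA Ad1 X1) as [HN [Hg [Hr [HNr [Hth [Ht [Hvt [Hc [Hd1 [Hx1 [HA1 [HB1 HE1]]]]]]]]]]]].
  destruct (basic h hd n2 gam rho th t vt x2 HA Ad2 X2) as [HN2 [_ [_ [HNr2 [_ [_ [_ [Hc2 [Hd2 [Hx2 [HA2 [HB2 HE2]]]]]]]]]]]].
  assert (HN1 : 3 <= INR n1) by (pose proof (le_INR 3 n1 H3) as HH; simpl in HH; lra).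
  assert (HN12 : INR n1 < INR n2) by (apply lt_INR; exact H12).
  destruct Ad1 as [_ [_ [_ [_ [_ [_ [_ [_ [Hall [Hreg2 _]]]]]]]]]].
  apply Rnot_le_lt; intro Hle.
  pose proof (f_mono h hd gam HA ltac:(lra) x2 x1 ltac:(lra) Hle ltac:(lra) Hd1) as Hf.
  set (N1 := INR n1) in *. set (N2 := INR n2) in *.
  set (V := 1 - vt) in *.
  set (P := th * t).
  assert (HP : 0 < P) by (unfold P; nra).
  set (c1 := th * (t / N1)) in *. set (c2 := th * (t / N2)) in *.
  assert (Hc1N : c1 * N1 = P) by (unfold c1, P; field; lra).
  assert (Hc2N : c2 * N2 = P) by (unfold c2, P; field; lra).
  assert (Hc12 : c2 < c1) by nra.
  assert (S1 : rho * V * 2 <= c1).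
  { pose proof (Hall 1 ltac:(lra)) as Hall1. rewrite Rmult_1_r in Hall1.
    unfold tau2 in Hreg2. fold N1 in Hreg2, Hall1.
    set (f1 := hd 1 / (gam * h 1)) in *.
    set (s := rho / (1 - N1 * rho)) in *.
    assert (Hs : s * (1 - N1 * rho) = rho) by (unfold s; field; lra).
    set (w := N1 * rho / (1 - N1 * rho)) in *.
    assert (Hw : w = N1 * s) by (unfold w, s; field; lra).
    set (a := f1 - s) in *.
    assert (Ha : (N1 - 1) * s < a) by (unfold a; nra).
    assert (Hs0 : 0 < s) by nra.
    assert (Ha0 : 0 < a) by nra.
    set (T := / (1 + / a)) in *.
    assert (HT : T * (1 + a) = a) by (unfold T; field; split; lra).
    assert (H1 : a * V < c1 * (1 + a)).
    { replace (a * V) with (T * V * (1 + a)) by (transitivity (T * (1 + a) * V); [ring | rewrite HT; ring]). apply Rmult_lt_compat_r; lra. }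
    assert (H2 : 2 * rho <= a * (1 - 2 * rho)).
    { assert (2 * s <= a) by nra. nra. }
    nra. }
  set (x := x1) in *.
  set (D1 := 1 - N1 * rho * x). set (D2 := 1 - N2 * rho * x).
  set (u2 := N2 * rho) in *.
  assert (HN1r : 0 < N1 * rho) by nra.
  assert (HN2r : N1 * rho < u2) by (unfold u2; nra).
  assert (HD1 : 1 - u2 <= D1).
  { unfold D1. assert (N1 * rho * x <= N1 * rho) by (apply Rle_trans with (N1 * rho * 1); [apply Rmult_le_compat_l; lra | lra]). lra. }
  assert (HD2 : 1 - u2 <= D2).
  { unfold D2. fold u2. assert (u2 * x <= u2) by (apply Rle_trans with (u2 * 1); [apply Rmult_le_compat_l; lra | lra]). lra. }
  assert (S2 : u2 <= 2 * (D1 * D2)).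
  { assert (0 < 1 - u2) by lra. assert ((1-u2)*(1-u2) <= D1 * D2) by nra. nra. }
  set (E1 := V - c1 * x). set (E2 := V - c2 * x).
  assert (HE1p : 0 < E1) by (unfold E1; lra).
  assert (HE12 : E1 < E2) by (unfold E1, E2; nra).
  assert (HE1V : E1 < V) by (unfold E1; nra).
  assert (HE2V : E2 < V) by (unfold E2; nra).
  assert (S3 : rho * rho * x * N1 * N2 * (E1 * E2) < V * P * (D1 * D2)).
  { assert (HV : 0 < V) by (unfold V; lra).
    assert (HVP : 0 < V * P) by (apply Rmult_lt_0_compat; lra).
    assert (Q1 : V * P * u2 <= 2 * V * P * (D1 * D2)).
    { replace (2 * V * P * (D1 * D2)) with (V * P * (2 * (D1 * D2))) by ring. apply Rmult_le_compat_l; lra. }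
    assert (Q2 : V * u2 * N1 * (rho * V * 2) <= V * u2 * N1 * c1).
    { assert (0 <= V * u2 * N1) by (apply Rmult_le_pos; [apply Rmult_le_pos|]; lra). apply Rmult_le_compat_l; lra. }
    assert (Q3 : E1 * E2 < V * V) by (apply Rmult_le_0_lt_compat; lra).
    assert (Q4 : 0 < rho * rho * N1 * N2) by (repeat apply Rmult_lt_0_compat; lra).
    assert (HE : 0 < E1 * E2) by (apply Rmult_lt_0_compat; lra).
    assert (Q5 : rho * rho * N1 * N2 * (x * (E1 * E2)) < rho * rho * N1 * N2 * (V * V)).
    { apply Rmult_lt_compat_l; [exact Q4|].
      assert (x * (E1 * E2) < 1 * (E1 * E2)) by (apply Rmult_lt_compat_r; lra). lra. }
    assert (EQ1 : rho * rho * N1 * N2 * (V * V) * 2 = V * u2 * N1 * (rho * V * 2)) by (unfold u2; ring).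
    assert (EQ2 : V * u2 * N1 * c1 = V * P * u2) by (rewrite <- Hc1N; ring).
    replace (rho * rho * x * N1 * N2 * (E1 * E2)) with (rho * rho * N1 * N2 * (x * (E1 * E2))) by ring.
    lra. }
  set (g1 := rho / D1). set (g2 := rho / D2).
  assert (HD1p : 0 < D1) by lra. assert (HD2p : 0 < D2) by lra.
  assert (Hg1 : g1 * D1 = rho) by (unfold g1; field; lra).
  assert (Hg2 : g2 * D2 = rho) by (unfold g2; field; lra).
  set (q1 := c1 / E1). set (q2 := c2 / E2).
  assert (Hq1 : q1 * E1 = c1) by (unfold q1; field; lra).
  assert (Hq2 : q2 * E2 = c2) by (unfold q2; field; lra).
  assert (HM : 0 < E1 * E2 * D1 * D2) by (repeat apply Rmult_lt_0_compat; lra).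
  assert (S4 : q2 + g2 < q1 + g1).
  { apply (Rmult_lt_reg_r (E1 * E2 * D1 * D2)); [exact HM|].
    replace ((q2 + g2) * (E1 * E2 * D1 * D2)) with ((q2*E2) * E1 * D1 * D2 + (g2 * D2) * E1 * E2 * D1) by ring.
    replace ((q1 + g1) * (E1 * E2 * D1 * D2)) with ((q1*E1) * E2 * D1 * D2 + (g1 * D1) * E1 * E2 * D2) by ring.
    rewrite Hq1, Hq2, Hg1, Hg2.
    assert (Z1 : c1 * E2 - c2 * E1 = V * (c1 - c2)) by (unfold E1, E2; ring).
    assert (Z2 : D2 - D1 = - (rho * x * (N2 - N1))) by (unfold D1, D2, u2; ring).
    assert (W : (c1 - c2) * (N1 * N2) = P * (N2 - N1)).
    { transitivity ((c1 * N1) * N2 - (c2 * N2) * N1); [ring|]. rewrite Hc1N, Hc2N. ring. }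
    assert (HNN : 0 < N1 * N2) by (apply Rmult_lt_0_compat; lra).
    assert (S3' : rho * rho * x * N1 * N2 * (E1 * E2) * (N2 - N1) < V * P * (D1 * D2) * (N2 - N1))
      by (apply Rmult_lt_compat_r; lra).
    assert (Z : 0 < (c1 * E2 - c2 * E1) * D1 * D2 + rho * E1 * E2 * (D2 - D1)).
    { rewrite Z1, Z2. apply (Rmult_lt_reg_r (N1 * N2)); [exact HNN|]. rewrite Rmult_0_l.
      replace ((V * (c1 - c2) * D1 * D2 + rho * E1 * E2 * - (rho * x * (N2 - N1))) * (N1 * N2))
        with (V * ((c1 - c2) * (N1 * N2)) * D1 * D2 - rho * rho * x * N1 * N2 * (E1 * E2) * (N2 - N1)) by ring.
      rewrite W.
      replace (V * (P * (N2 - N1)) * D1 * D2) with (V * P * (D1 * D2) * (N2 - N1)) by ring.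
      lra. }
    lra. }
  assert (Hg2' : rho / (1 - u2 * x2) <= g2).
  { unfold g2, D2. apply g_cmp; [lra| |].
    - fold u2. assert (0 <= u2 * x2) by (apply Rmult_le_pos; lra). split; [lra|].
      apply Rmult_le_compat_l; lra.
    - fold u2. assert (u2 * x < u2 * 1) by (apply Rmult_lt_compat_l; lra). lra. }
  set (fv1 := hd x / (gam * h x)) in *. set (fv2 := hd x2 / (gam * h x2)) in *.
  set (A1 := fv1 - rho / (1 - N1 * rho * x)) in *.
  set (A2 := fv2 - rho / (1 - u2 * x2)) in *.
  assert (HA1q : A1 = q1).
  { apply (Rmult_eq_reg_r E1); [|lra]. rewrite Hq1. unfold E1. exact HE1. }
  assert (HB2E : E2 <= V - c2 * x2) by (unfold E2; nra).
  assert (HA2q : A2 <= q2).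
  { apply (Rmult_le_reg_r (V - c2 * x2)); [lra|]. rewrite HE2.
    rewrite <- Hq2 at 1. apply Rmult_le_compat_l; [|lra].
    unfold q2; apply Rlt_le, Rdiv_lt_0_compat; lra. }
  assert (Hg1e : g1 = rho / (1 - N1 * rho * x)) by reflexivity.
  unfold A1, A2 in *. lra.
Qed.
Theorem proposition2 (h hd : R -> R) :
  h_assumptions h hd ->
  (* (1a) decreasing in vartheta *)
  (forall n gam rho th t vt1 vt2 x1 x2,
     admissible n gam rho th t vt1 h hd -> admissible n gam rho th t vt2 h hd ->
     is_xhat n gam rho th t vt1 h hd x1 -> is_xhat n gam rho th t vt2 h hd x2 ->
     vt1 < vt2 -> x2 < x1) /\
  (* (1b) decreasing in theta *)
  (forall n gam rho th1 th2 t vt x1 x2,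
     admissible n gam rho th1 t vt h hd -> admissible n gam rho th2 t vt h hd ->
     is_xhat n gam rho th1 t vt h hd x1 -> is_xhat n gam rho th2 t vt h hd x2 ->
     th1 < th2 -> x2 < x1) /\
  (* (1c) decreasing in t *)
  (forall n gam rho th t1 t2 vt x1 x2,
     admissible n gam rho th t1 vt h hd -> admissible n gam rho th t2 vt h hd ->
     is_xhat n gam rho th t1 vt h hd x1 -> is_xhat n gam rho th t2 vt h hd x2 ->
     t1 < t2 -> x2 < x1) /\
  (* (1d) decreasing in rho *)
  (forall n gam rho1 rho2 th t vt x1 x2,
     admissible n gam rho1 th t vt h hd -> admissible n gam rho2 th t vt h hd ->
     is_xhat n gam rho1 th t vt h hd x1 -> is_xhat n gam rho2 th t vt h hd x2 ->
     rho1 < rho2 -> x2 < x1) /\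
  (* (2) increasing in n for n >= 3 *)
  (forall (n1 n2 : nat) gam rho th t vt x1 x2,
     (3 <= n1)%nat -> (n1 < n2)%nat ->
     admissible n1 gam rho th t vt h hd -> admissible n2 gam rho th t vt h hd ->
     is_xhat n1 gam rho th t vt h hd x1 -> is_xhat n2 gam rho th t vt h hd x2 ->
     x1 < x2).
Proof.
  intros HA. split; [exact (part1a h hd HA)|]. split; [exact (part1b h hd HA)|].
  split; [exact (part1c h hd HA)|]. split; [exact (part1d h hd HA)|]. exact (part2 h hd HA).
Qed.
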